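(* Let $n\geq 3$ and let $A$ be an $F_n$-good $n\times n$ matrix. If row $i$ of $A$ has two entries equal to $1$, in columns $j$ and $k$ with $j<k$, then $k=j+2$ and $i\in\{1,n\}$.
   Context: $F_n$ is the set of vectors $\vec{x}=(x_1,\ldots,x_n)\in\mathbb{Z}_2^n$ with no $i$ such that $x_i=x_{i+1}=1$. An $n\times n$ matrix $A$ over $\mathbb{Z}_2$ is $F_n$-good if it is invertible and $A\vec{x}\in F_n$ for all $\vec{x}\in F_n$. *)

(* Defs.v *)
From mathcomp Require Import all_boot all_algebra.
Set Implicit Arguments. Unset Strict Implicit. Unset Printing Implicit Defensive.
Import GRing.Theory.
Local Open Scope ring_scope.

(* Vectors in Z_2^n are column vectors 'cV['F_2]_n, indices 0-based:
   coordinate x_{i+1} of the paper is x i 0. *)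

Definition in_Fn (n : nat) (x : 'cV['F_2]_n) : Prop :=
  forall i j : 'I_n, (j : nat) = i.+1 -> ~ (x i 0 = 1 /\ x j 0 = 1).

Definition Fn_good (n : nat) (A : 'M['F_2]_n) : Prop :=
  A \in unitmx /\ forall x : 'cV['F_2]_n, in_Fn x -> in_Fn (A *m x).

(* Main.v *)
Require Import Defs.
From mathcomp Require Import all_boot all_algebra.
From mathcomp Require Import zify.
Set Implicit Arguments. Unset Strict Implicit. Unset Printing Implicit Defensive.
Import GRing.Theory.
Local Open Scope ring_scope.

Lemma F2_cases (x : 'F_2) : x = 0 \/ x = 1.
Proof. by case: x => [[|[|m]] Hm]; [left; apply/val_inj|right; apply/val_inj|]. Qed.

Lemma F2_10 : (1 : 'F_2) != 0. Proof. by []. Qed.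

Lemma mul_delta n (A : 'M['F_2]_n) (r a : 'I_n) :
  (A *m (delta_mx a (0 : 'I_1) : 'cV_n)) r 0 = A r a.
Proof. by rewrite -colE mxE. Qed.

Lemma delta_in_Fn n (a : 'I_n) : in_Fn (delta_mx a 0 : 'cV['F_2]_n).
Proof.
move=> i j Hj; rewrite !mxE /= !andbT => -[].
case: (i =P a) => [Ei|_]; case: (j =P a) => [Ej|_] //= _ _.
by subst; lia.
Qed.

Lemma delta2_in_Fn n (a b : 'I_n) : ((nat_of_ord b) <> ((nat_of_ord a)).+1) -> ((nat_of_ord a) <> ((nat_of_ord b)).+1) ->
  in_Fn (delta_mx a 0 + delta_mx b 0 : 'cV['F_2]_n).
Proof.
move=> Hab Hba i j Hj; rewrite !mxE /= => -[].
have H : forall l : 'I_n, ((l == a)%:R + (l == b)%:R : 'F_2) = 1 -> (l == a) || (l == b).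
  by move=> l; case: (l == a); case: (l == b).
rewrite !andbT => /H /orP Hi /H /orP Hjj.
case: Hi => /eqP Hi; case: Hjj => /eqP Hjj; subst; move: Hab Hba => /= Hab Hba; lia.
Qed.

Section S.
Variables (n : nat) (A : 'M['F_2]_n).
Hypothesis HA : Fn_good A.

Definition adj (p q : 'I_n) := (nat_of_ord q) = ((nat_of_ord p)).+1 \/ (nat_of_ord p) = ((nat_of_ord q)).+1.

Lemma adj_no (p q : 'I_n) (x : 'cV['F_2]_n) : adj p q -> in_Fn x ->
  ~ ((A *m x) p 0 = 1 /\ (A *m x) q 0 = 1).
Proof.
move=> [H|H] Hx [H1 H2]; have := HA.2 x Hx.
- by move=> /(_ p q H); apply.
- by move=> /(_ q p H); apply.
Qed.

Lemma adj_disj (p q : 'I_n) (a : 'I_n) : adj p q -> A p a = 1 -> A q a = 0.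
Proof.
move=> Hpq Hp; case: (F2_cases (A q a)) => Hq //; exfalso.
by apply: (adj_no Hpq (@delta_in_Fn _ a)); rewrite !mul_delta.
Qed.

Lemma adj_near (p q : 'I_n) (a b : 'I_n) : adj p q -> A p a = 1 -> A q b = 1 ->
  (nat_of_ord b) = ((nat_of_ord a)).+1 \/ (nat_of_ord a) = ((nat_of_ord b)).+1.
Proof.
move=> Hpq Hp Hq.
have Hqa := adj_disj Hpq Hp.
have Hqp : adj q p by case: Hpq; [right|left].
have Hpb := adj_disj Hqp Hq.
case: (eqVneq ((nat_of_ord b)) ((nat_of_ord a)).+1) => [?|]; first by left.
case: (eqVneq ((nat_of_ord a)) ((nat_of_ord b)).+1) => [?|]; first by right.
move=> /eqP H1 /eqP H2; exfalso.
apply: (adj_no Hpq (delta2_in_Fn H1 H2)).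
by rewrite mulmxDr -!colE !mxE Hp Hq Hqa Hpb addr0 add0r.
Qed.

Lemma row_nonzero (p : 'I_n) : exists l, A p l = 1.
Proof.
case: (pickP (fun l => A p l == 1)) => [l /eqP|H]; first by exists l.
exfalso; have := HA.1; rewrite unitmxE unitfE (expand_det_row _ p) big1 ?eqxx //.
move=> l _; have := H l; case: (F2_cases (A p l)) => [->|->] //.
by rewrite mul0r.
Qed.
End S.

(* Indices are 0-based: row i in {1, n} of the paper is i = 0 or i = n-1. *)
Theorem lemma2 (n : nat) (A : 'M['F_2]_n) (i j k : 'I_n) :
  (3 <= n)%N -> Fn_good A ->
  (j < k)%N -> A i j = 1 -> A i k = 1 ->
  (k : nat) = (j + 2)%N /\ ((i : nat) = 0%N \/ (i : nat) = n.-1).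
Proof.
move=> Hn HA Hjk Hij Hik.
have Nb : forall s : 'I_n, adj i s ->
    (k : nat) = (j + 2)%N /\ forall l, A s l = 1 -> (nat_of_ord l) = ((nat_of_ord j)).+1.
  move=> s Hs; have [l0 Hl0] := row_nonzero HA s.
  have H1 := adj_near HA Hs Hij Hl0; have H2 := adj_near HA Hs Hik Hl0.
  split; first lia.
  move=> l Hl; have H3 := adj_near HA Hs Hij Hl; have H4 := adj_near HA Hs Hik Hl; lia.
have Hk : (k : nat) = (j + 2)%N.
  case: (ltnP ((nat_of_ord i)).+1 n) => Hi.
  - by apply: (proj1 (Nb (Ordinal Hi) _)); left.
  - have Hi' : (((nat_of_ord i)).-1 < n)%N by have := ltn_ord i; lia.
    by apply: (proj1 (Nb (Ordinal Hi') _)); right => /=; have := ltn_ord i; lia.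
split => //.
case: (eqVneq ((nat_of_ord i)) 0%N) => [->|H0]; first by left.
case: (eqVneq ((nat_of_ord i)) n.-1) => [->|H1]; first by right.
exfalso.
have Hi1 : (((nat_of_ord i)).+1 < n)%N by have := ltn_ord i; lia.
have Hi2 : (((nat_of_ord i)).-1 < n)%N by have := ltn_ord i; lia.
set s1 := Ordinal Hi1. set s2 := Ordinal Hi2.
have A1 : adj i s1 by left.
have A2 : adj i s2 by right => /=; lia.
have E : forall s, adj i s -> forall l, A s l = ((nat_of_ord l) == ((nat_of_ord j)).+1)%:R.
  move=> s Hs l; have [_ H] := Nb s Hs.
  have [l0 Hl0] := row_nonzero HA s.
  have := H l0 Hl0; case: (F2_cases (A s l)) => Hsl Hl0v.
  - rewrite Hsl; case: (eqVneq ((nat_of_ord l)) ((nat_of_ord j)).+1) => //= Heq.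
    have : l = l0 by apply/val_inj; rewrite /= Heq Hl0v.
    by move=> Hll; rewrite Hll Hl0 in Hsl.
  - by rewrite Hsl (H l Hsl) eqxx.
have := HA.1; rewrite unitmxE unitfE (determinant_alternate (i1 := s1) (i2 := s2)) ?eqxx //.
- by apply/eqP => /(congr1 val) /=; lia.
- by move=> l; rewrite (E _ A1) (E _ A2).
Qed.
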